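(* Let $(L,\delta,\alpha,\beta)$, $(V,\mu,\alpha_V,\beta_V)$ and $(M,d',\alpha_M,\beta_M)$ be BiHom-Lie algebras and let $$E:\ 0\longrightarrow (V,\mu,\alpha_V,\beta_V)\xrightarrow{\ i\ }(M,d',\alpha_M,\beta_M)\xrightarrow{\ \pi\ }(L,\delta,\alpha,\beta)\longrightarrow 0$$ be a split extension of $L$ by $V$. Then there exist bilinear maps $\lambda_l\colon L\times V\to V$, $\lambda_r\colon V\times L\to V$, $\theta\colon L\times L\to V$ such that, with $d\colon (L\oplus V)^2\to L\oplus V$ defined by $$d(x+v,y+w)=\delta(x,y)+\theta(x,y)+\lambda_l(x,w)+\lambda_r(v,y)+\mu(v,w)\qquad(x,y\in L,\ v,w\in V),$$ the pair $(\lambda_l,\lambda_r)$ is a representation of $L$ on $(V,\alpha_V,\beta_V)$, $\theta$ is a $2$-cocycle of $L$ on $V$ with respect to it, and $$E_0:\ 0\longrightarrow (V,\mu,\alpha_V,\beta_V)\xrightarrow{\ i_0\ }(L\oplus V,d,\alpha+\alpha_V,\beta+\beta_V)\xrightarrow{\ \pi_0\ }(L,\delta,\alpha,\beta)\longrightarrow 0,$$ where $i_0(v)=v$ and $\pi_0(x+v)=x$, is a split extension of $L$ by $V$ which is equivalent to $E$.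
   Context: All vector spaces are over a field $\mathbb{K}$. A BiHom-Lie algebra $(L,[\cdot,\cdot],\alpha,\beta)$ is a vector space $L$ with a bilinear map $[\cdot,\cdot]\colon L\times L\to L$ and linear maps $\alpha,\beta\colon L\to L$ such that $\alpha\circ\beta=\beta\circ\alpha$, $[\beta(x),\alpha(y)]=-[\beta(y),\alpha(x)]$, and $[\beta^2(x),[\beta(y),\alpha(z)]]+[\beta^2(y),[\beta(z),\alpha(x)]]+[\beta^2(z),[\beta(x),\alpha(y)]]=0$ for all $x,y,z$ ($\alpha,\beta$ need not be multiplicative). A morphism $f\colon(L,[\cdot,\cdot],\alpha,\beta)\to(L',[\cdot,\cdot]',\alpha',\beta')$ is a linear map with $f\circ\alpha=\alpha'\circ f$, $f\circ\beta=\beta'\circ f$, $f([x,y])=[f(x),f(y)]'$. A BiHom-subalgebra of $(M,d,\alpha_M,\beta_M)$ is a subspace $H$ with $\alpha_M(H)\subset H$, $\beta_M(H)\subset H$, $d(H,H)\subset H$. On $L\oplus V$, $\alpha+\alpha_V$ denotes $x+v\mapsto\alpha(x)+\alpha_V(v)$, similarly $\beta+\beta_V$. An extension of $(L,\delta,\alpha,\beta)$ by $(V,\mu,\alpha_V,\beta_V)$ is a sequence $0\to V\xrightarrow{i}M\xrightarrow{\pi}L\to0$ of BiHom-Lie algebras and morphisms with $i$ injective, $\pi$ surjective, $\mathrm{Im}(i)=\ker(\pi)$. It is split if there is a BiHom-subalgebra $S\subset M$ with $M=S\oplus\ker\pi$. Two extensions $0\to V_1\xrightarrow{i_1}M_1\xrightarrow{\pi_1}L_1\to0$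 and $0\to V_2\xrightarrow{i_2}M_2\xrightarrow{\pi_2}L_2\to0$ are equivalent if there are linear maps $\varphi\colon V_1\to V_2$, $s\colon L_1\to L_2$ and an isomorphism of BiHom-Lie algebras $\Phi\colon M_1\to M_2$ with $\Phi\circ i_1=i_2\circ\varphi$ and $\pi_2\circ\Phi=s\circ\pi_1$. A representation of $(L,\delta,\alpha,\beta)$ on $(V,\alpha_V,\beta_V)$ (with $\alpha_V\beta_V=\beta_V\alpha_V$) is a pair of bilinear maps $\lambda_l\colon L\times V\to V$, $\lambda_r\colon V\times L\to V$ with, for all $x,y\in L$, $v\in V$: $\lambda_r(\beta_V(v),\alpha(y))=-\lambda_l(\beta(y),\alpha_V(v))$ and $\lambda_l(\beta^2(x),\lambda_l(\beta(y),\alpha_V(v)))+\lambda_l(\beta^2(y),\lambda_r(\beta_V(v),\alpha(x)))+\lambda_r(\beta_V^2(v),\delta(\beta(x),\alpha(y)))=0$. A $2$-cocycle of $L$ on $V$ with respect to it is a bilinear $\theta\colon L\times L\to V$ with $\theta(\beta(x),\alpha(y))=-\theta(\beta(y),\alpha(x))$ and $\theta(\beta^2(x),\delta(\beta(y),\alpha(z)))-\theta(\beta^2(y),\delta(\beta(x),\alpha(z)))+\theta(\beta^2(z),\delta(\beta(x),\alpha(y)))+\lambda_l(\beta^2(x),\theta(\beta(y),\alpha(z)))-\lambda_l(\beta^2(y),\theta(\beta(x),\alpha(z)))+\lambda_l(\beta^2(z),\theta(\beta(x),\alpha(y)))=0$ for all $x,y,z\in L$. *)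

(* Defs.v *)
From HB Require Import structures.
From mathcomp Require Import all_boot all_order all_algebra.
Set Implicit Arguments. Unset Strict Implicit. Unset Printing Implicit Defensive.
Import GRing.Theory.
Local Open Scope ring_scope.

Section BiHom.
Variable K : fieldType.

Definition bilinear_map (U W Z : lmodType K) (f : U -> W -> Z) : Prop :=
  (forall x, linear (f x)) /\ (forall y, linear (fun x => f x y)).

(* BiHom-Lie algebra (L,[.,.],alpha,beta); alpha, beta linear, not necessarily multiplicative *)
Definition BiHomLie (L : lmodType K) (br : L -> L -> L) (al be : L -> L) : Prop :=
  ((bilinear_map br) /\ (linear al) /\ (linear be) /\ ((forall x, al (be x) = be (al x))) /\ ((forall x y, br (be x) (al y) = - br (be y) (al x))) /\ ((forall x y z, br (be (be x)) (br (be y) (al z))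
                   + br (be (be y)) (br (be z) (al x))
                   + br (be (be z)) (br (be x) (al y)) = 0))).

Definition BiHomMorph (L L' : lmodType K) (br : L -> L -> L) (al be : L -> L)
  (br' : L' -> L' -> L') (al' be' : L' -> L') (f : L -> L') : Prop :=
  ((linear f) /\ ((forall x, f (al x) = al' (f x))) /\ ((forall x, f (be x) = be' (f x))) /\ ((forall x y, f (br x y) = br' (f x) (f y)))).

Definition BiHomSub (M : lmodType K) (d : M -> M -> M) (aM bM : M -> M)
  (H : M -> Prop) : Prop :=
  ((H 0) /\ ((forall a u v, H u -> H v -> H (a *: u + v))) /\ ((forall x, H x -> H (aM x))) /\ ((forall x, H x -> H (bM x))) /\ ((forall x y, H x -> H y -> H (d x y)))).

Definition BiHomExtension (V M L : lmodType K)
  (mu : V -> V -> V) (aV bV : V -> V)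
  (dM : M -> M -> M) (aM bM : M -> M)
  (dL : L -> L -> L) (aL bL : L -> L)
  (i : V -> M) (pi : M -> L) : Prop :=
  ((BiHomLie mu aV bV) /\ (BiHomLie dM aM bM) /\ (BiHomLie dL aL bL) /\ (BiHomMorph mu aV bV dM aM bM i) /\ (BiHomMorph dM aM bM dL aL bL pi) /\ (injective i) /\ ((forall y, exists x, pi x = y)) /\ ((forall m, (exists v, i v = m) <-> pi m = 0))).

Definition BiHomSplitExtension (V M L : lmodType K)
  (mu : V -> V -> V) (aV bV : V -> V)
  (dM : M -> M -> M) (aM bM : M -> M)
  (dL : L -> L -> L) (aL bL : L -> L)
  (i : V -> M) (pi : M -> L) : Prop :=
  BiHomExtension mu aV bV dM aM bM dL aL bL i pi /\
  exists S : M -> Prop, BiHomSub dM aM bM S /\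
     (forall m, exists s k, S s /\ pi k = 0 /\ m = s + k) /\
     (forall m, S m -> pi m = 0 -> m = 0).

Definition BiHomExtEquiv (V1 M1 L1 V2 M2 L2 : lmodType K)
  (d1 : M1 -> M1 -> M1) (a1 b1 : M1 -> M1) (i1 : V1 -> M1) (pi1 : M1 -> L1)
  (d2 : M2 -> M2 -> M2) (a2 b2 : M2 -> M2) (i2 : V2 -> M2) (pi2 : M2 -> L2) : Prop :=
  exists (phi : V1 -> V2) (s : L1 -> L2) (Phi : M1 -> M2),
    ((linear phi) /\ (linear s) /\ (BiHomMorph d1 a1 b1 d2 a2 b2 Phi) /\ (bijective Phi) /\ ((forall v, Phi (i1 v) = i2 (phi v))) /\ ((forall m, pi2 (Phi m) = s (pi1 m)))).

Definition BiHomRep (L V : lmodType K) (delta : L -> L -> L) (al be : L -> L)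
  (aV bV : V -> V) (ll : L -> V -> V) (lr : V -> L -> V) : Prop :=
  (((forall v, aV (bV v) = bV (aV v))) /\ (bilinear_map ll) /\ (bilinear_map lr) /\ ((forall y v, lr (bV v) (al y) = - ll (be y) (aV v))) /\ ((forall x y v, ll (be (be x)) (ll (be y) (aV v))
                   + ll (be (be y)) (lr (bV v) (al x))
                   + lr (bV (bV v)) (delta (be x) (al y)) = 0))).

Definition BiHomCocycle (L V : lmodType K) (delta : L -> L -> L) (al be : L -> L)
  (ll : L -> V -> V) (theta : L -> L -> V) : Prop :=
  ((bilinear_map theta) /\ ((forall x y, theta (be x) (al y) = - theta (be y) (al x))) /\ ((forall x y z,
        theta (be (be x)) (delta (be y) (al z)) - theta (be (be y)) (delta (be x) (al z))
        + theta (be (be z)) (delta (be x) (al y))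
        + ll (be (be x)) (theta (be y) (al z)) - ll (be (be y)) (theta (be x) (al z))
        + ll (be (be z)) (theta (be x) (al y)) = 0))).

Definition sumBracket (L V : lmodType K) (delta : L -> L -> L) (mu : V -> V -> V)
  (ll : L -> V -> V) (lr : V -> L -> V) (theta : L -> L -> V)
  (p q : (L * V)%type) : (L * V)%type :=
  (delta p.1 q.1, theta p.1 q.1 + ll p.1 q.2 + lr p.2 q.1 + mu p.2 q.2).

Definition sumMap (L V : lmodType K) (f : L -> L) (g : V -> V) (p : (L * V)%type)
  : (L * V)%type := (f p.1, g p.2).

Definition inj0 (L V : lmodType K) (v : V) : (L * V)%type := (0, v).
Definition proj0 (L V : lmodType K) (p : (L * V)%type) : L := p.1.

End BiHom.

(* Main.v *)
Require Import Defs.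
From HB Require Import structures.
From mathcomp Require Import all_boot all_order all_algebra.
From Stdlib Require Import ClassicalEpsilon.
Set Implicit Arguments. Unset Strict Implicit.
Local Open Scope ring_scope.
Import GRing.Theory.

Section Aux.
Variable K : fieldType.

Lemma pairE (L V : lmodType K) (p q : L * V) a : a *: p + q = (a *: p.1 + q.1, a *: p.2 + q.2).
Proof. by []. Qed.
Lemma pair0 (L V : lmodType K) : (0 : L * V) = (0, 0).
Proof. by []. Qed.
Lemma pairD (L V : lmodType K) (p q : L * V) : p + q = (p.1 + q.1, p.2 + q.2).
Proof. by []. Qed.
Lemma pairN (L V : lmodType K) (p : L * V) : - p = (- p.1, - p.2).
Proof. by []. Qed.

Lemma linD (U W : lmodType K) (f : U -> W) : linear f -> forall x y, f (x + y) = f x + f y.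
Proof. by move=> H x y; have := H 1 x y; rewrite !scale1r. Qed.
Lemma lin0 (U W : lmodType K) (f : U -> W) : linear f -> f 0 = 0.
Proof.
move=> H; have h := H 1 0 0; rewrite scale1r addr0 scale1r in h.
by apply: (addrI (f 0)); rewrite addr0 -h.
Qed.
Lemma linZ (U W : lmodType K) (f : U -> W) : linear f -> forall a x, f (a *: x) = a *: f x.
Proof. by move=> H a x; have := H a x 0; rewrite (lin0 H) !addr0. Qed.
Lemma linN (U W : lmodType K) (f : U -> W) : linear f -> forall x, f (- x) = - f x.
Proof. by move=> H x; rewrite -scaleN1r linZ // scaleN1r. Qed.

Lemma blDl (U W Z : lmodType K) (f : U -> W -> Z) : bilinear_map f ->
  forall x y z, f (x + y) z = f x z + f y z.
Proof. by move=> [_ H] x y z; exact: (linD (H z)). Qed.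
Lemma blDr (U W Z : lmodType K) (f : U -> W -> Z) : bilinear_map f ->
  forall x y z, f x (y + z) = f x y + f x z.
Proof. by move=> [H _] x y z; exact: (linD (H x)). Qed.
Lemma bl0l (U W Z : lmodType K) (f : U -> W -> Z) : bilinear_map f ->
  forall z, f 0 z = 0.
Proof. by move=> [_ H] z; exact: (lin0 (H z)). Qed.
Lemma bl0r (U W Z : lmodType K) (f : U -> W -> Z) : bilinear_map f ->
  forall z, f z 0 = 0.
Proof. by move=> [H _] z; exact: (lin0 (H z)). Qed.
Lemma blZl (U W Z : lmodType K) (f : U -> W -> Z) : bilinear_map f ->
  forall a x z, f (a *: x) z = a *: f x z.
Proof. by move=> [_ H] a x z; exact: (linZ (H z)). Qed.
Lemma blZr (U W Z : lmodType K) (f : U -> W -> Z) : bilinear_map f ->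
  forall a x z, f z (a *: x) = a *: f z x.
Proof. by move=> [H _] a x z; exact: (linZ (H z)). Qed.
Lemma blNl (U W Z : lmodType K) (f : U -> W -> Z) : bilinear_map f ->
  forall x z, f (- x) z = - f x z.
Proof. by move=> [_ H] x z; exact: (linN (H z)). Qed.
Lemma blNr (U W Z : lmodType K) (f : U -> W -> Z) : bilinear_map f ->
  forall x z, f z (- x) = - f z x.
Proof. by move=> [H _] x z; exact: (linN (H z)). Qed.
End Aux.

Section Main.
Variables (K : fieldType) (L V M : lmodType K)
  (delta : L -> L -> L) (al be : L -> L)
  (mu : V -> V -> V) (aV bV : V -> V)
  (d' : M -> M -> M) (aM bM : M -> M)
  (i : V -> M) (pi : M -> L) (S : M -> Prop).
Hypotheses (HdL : bilinear_map delta) (Hal : linear al) (Hbe : linear be)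
  (HcL : forall x, al (be x) = be (al x))
  (HdV : bilinear_map mu) (HaV : linear aV) (HbV : linear bV)
  (HcV : forall x, aV (bV x) = bV (aV x))
  (HdM : bilinear_map d') (HaM : linear aM) (HbM : linear bM)
  (HcM : forall x, aM (bM x) = bM (aM x))
  (HskM : forall x y, d' (bM x) (aM y) = - d' (bM y) (aM x))
  (HjM : forall x y z, d' (bM (bM x)) (d' (bM y) (aM z))
                   + d' (bM (bM y)) (d' (bM z) (aM x))
                   + d' (bM (bM z)) (d' (bM x) (aM y)) = 0)
  (Hil : linear i) (Hia : forall x, i (aV x) = aM (i x))
  (Hib : forall x, i (bV x) = bM (i x)) (Hibr : forall x y, i (mu x y) = d' (i x) (i y))
  (Hpl : linear pi) (Hpa : forall x, pi (aM x) = al (pi x))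
  (Hpb : forall x, pi (bM x) = be (pi x)) (Hpbr : forall x y, pi (d' x y) = delta (pi x) (pi y))
  (Hinj : injective i) (Hsurj : forall y, exists x, pi x = y)
  (Hker : forall m, (exists v, i v = m) <-> pi m = 0)
  (HS0 : S 0) (HSl : forall a u v, S u -> S v -> S (a *: u + v))
  (HSa : forall x, S x -> S (aM x)) (HSb : forall x, S x -> S (bM x))
  (HSd : forall x y, S x -> S y -> S (d' x y))
  (Hdec : forall m, exists s k, S s /\ pi k = 0 /\ m = s + k)
  (Hdisj : forall m, S m -> pi m = 0 -> m = 0).

Definition sec (x : L) : M := epsilon (inhabits 0) (fun m => S m /\ pi m = x).
Lemma sec_spec x : S (sec x) /\ pi (sec x) = x.
Proof.
apply: (@epsilon_spec M (inhabits 0) (fun m => S m /\ pi m = x)).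
have [m0 <-] := Hsurj x.
have [s [k [Ss [pk ->]]]] := Hdec m0.
by exists s; split=> //; rewrite (linD Hpl) pk addr0.
Qed.
Lemma S_uniq m1 m2 : S m1 -> S m2 -> pi m1 = pi m2 -> m1 = m2.
Proof.
move=> S1 S2 e.
have h : (-1) *: m2 + m1 = 0.
  apply: Hdisj; first exact: HSl.
  by rewrite (linD Hpl) (linZ Hpl) e scaleN1r addNr.
by apply/eqP; rewrite -subr_eq0 addrC -scaleN1r h.
Qed.
Lemma sec_lin : linear sec.
Proof.
move=> a x y; apply: S_uniq; first exact: (sec_spec _).1.
  by apply: HSl; apply: (sec_spec _).1.
by rewrite (linD Hpl) (linZ Hpl) !(sec_spec _).2.
Qed.
Lemma sec_al x : sec (al x) = aM (sec x).
Proof.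
apply: S_uniq; first exact: (sec_spec _).1.
  by apply: HSa; apply: (sec_spec _).1.
by rewrite Hpa !(sec_spec _).2.
Qed.
Lemma sec_be x : sec (be x) = bM (sec x).
Proof.
apply: S_uniq; first exact: (sec_spec _).1.
  by apply: HSb; apply: (sec_spec _).1.
by rewrite Hpb !(sec_spec _).2.
Qed.
Lemma sec_br x y : sec (delta x y) = d' (sec x) (sec y).
Proof.
apply: S_uniq; first exact: (sec_spec _).1.
  by apply: HSd; apply: (sec_spec _).1.
by rewrite Hpbr !(sec_spec _).2.
Qed.
Lemma pi_i v : pi (i v) = 0.
Proof. by apply/(Hker (i v)); exists v. Qed.
Lemma pi_sec x : pi (sec x) = x.
Proof. exact: (sec_spec _).2. Qed.

Definition iinv (m : M) : V := epsilon (inhabits 0) (fun v => i v = m).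
Lemma iinvK m : pi m = 0 -> i (iinv m) = m.
Proof. by move=> h; apply: (@epsilon_spec V (inhabits 0) (fun v => i v = m)); apply/(Hker m). Qed.
Lemma iinvE v : iinv (i v) = v.
Proof. by apply: Hinj; apply: iinvK; apply: pi_i. Qed.

Definition ll (x : L) (v : V) : V := iinv (d' (sec x) (i v)).
Definition lr (v : V) (y : L) : V := iinv (d' (i v) (sec y)).
Definition theta0 (x y : L) : V := 0.

Lemma ll_spec x v : i (ll x v) = d' (sec x) (i v).
Proof. by apply: iinvK; rewrite Hpbr pi_i pi_sec (bl0r HdL). Qed.
Lemma lr_spec v y : i (lr v y) = d' (i v) (sec y).
Proof. by apply: iinvK; rewrite Hpbr pi_i pi_sec (bl0l HdL). Qed.

Lemma ll_bil : bilinear_map ll.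
Proof.
split=> [x a v w | v a x y]; apply: Hinj.
  by rewrite Hil !ll_spec Hil (blDr HdM) (blZr HdM).
by rewrite Hil !ll_spec sec_lin (blDl HdM) (blZl HdM).
Qed.
Lemma lr_bil : bilinear_map lr.
Proof.
split=> [x a v w | v a x y]; apply: Hinj.
  by rewrite Hil !lr_spec sec_lin (blDr HdM) (blZr HdM).
by rewrite Hil !lr_spec Hil (blDl HdM) (blZl HdM).
Qed.
Lemma theta_bil : bilinear_map theta0.
Proof. by split=> x a u v; rewrite /theta0 scaler0 addr0. Qed.

Lemma rep : BiHomRep delta al be aV bV ll lr.
Proof.
split; first exact: HcV.
split; first exact: ll_bil.
split; first exact: lr_bil.
split.
  move=> y v; apply: Hinj; rewrite (linN Hil) lr_spec ll_spec.
  by rewrite Hib Hia sec_al sec_be HskM.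
move=> x y v; apply: Hinj.
rewrite !(linD Hil) (lin0 Hil) !ll_spec !lr_spec.
rewrite !Hib !Hia !sec_be !sec_al sec_br sec_al sec_be.
exact: HjM.
Qed.

Lemma cocyc : BiHomCocycle delta al be ll theta0.
Proof.
split; first exact: theta_bil.
split; first by move=> x y; rewrite /theta0 oppr0.
move=> x y z; rewrite /theta0 !(bl0r ll_bil).
by rewrite !(subr0, addr0).
Qed.

Definition Phi (p : L * V) : M := sec p.1 + i p.2.
Definition Psi (m : M) : L * V := (pi m, iinv (m - sec (pi m))).

Lemma Phi_lin : linear Phi.
Proof.
move=> a p q; rewrite /Phi /= sec_lin Hil scalerDr.
by rewrite -!addrA; congr (_ + _); rewrite addrCA.
Qed.
Lemma PhiK : cancel Phi Psi.
Proof.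
case=> x v; rewrite /Phi /Psi /= (linD Hpl) pi_sec pi_i addr0.
by rewrite (addrC (sec x)) addrK iinvE.
Qed.
Lemma PsiK : cancel Psi Phi.
Proof.
move=> m; rewrite /Phi /Psi /= iinvK.
  by rewrite addrC subrK.
by rewrite (linD Hpl) (linN Hpl) pi_sec subrr.
Qed.
Lemma Phi_inj : injective Phi.
Proof. exact: can_inj PhiK. Qed.

Lemma Phi_br p q : Phi (sumBracket delta mu ll lr theta0 p q) = d' (Phi p) (Phi q).
Proof.
rewrite /Phi /sumBracket /= sec_br !(linD Hil) ll_spec lr_spec Hibr /theta0 (lin0 Hil).
rewrite !(blDl HdM) !(blDr HdM) add0r !addrA.
congr (_ + _); rewrite -!addrA; congr (_ + _).
Qed.
Lemma Phi_al p : Phi (sumMap al aV p) = aM (Phi p).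
Proof. by rewrite /Phi /sumMap /= sec_al Hia (linD HaM). Qed.
Lemma Phi_be p : Phi (sumMap be bV p) = bM (Phi p).
Proof. by rewrite /Phi /sumMap /= sec_be Hib (linD HbM). Qed.

Lemma sum_lie : BiHomLie (sumBracket delta mu ll lr theta0) (sumMap al aV) (sumMap be bV).
Proof.
split.
  split=> [p a q r | p a q r]; apply: Phi_inj.
    rewrite (Phi_lin a (sumBracket delta mu ll lr theta0 p q)) !Phi_br (Phi_lin a q).
    by rewrite (blDr HdM) (blZr HdM).
  rewrite (Phi_lin a (sumBracket delta mu ll lr theta0 q p)) !Phi_br (Phi_lin a q).
  by rewrite (blDl HdM) (blZl HdM).
split.
  by move=> a p q; rewrite /sumMap /= Hal HaV.
split.
  by move=> a p q; rewrite /sumMap /= Hbe HbV.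
split.
  by move=> p; rewrite /sumMap /= HcL HcV.
split.
  by move=> p q; apply: Phi_inj; rewrite (linN Phi_lin) !Phi_br !Phi_al !Phi_be HskM.
move=> p q r; apply: Phi_inj.
by rewrite !(linD Phi_lin) !Phi_br !Phi_be !Phi_al (lin0 Phi_lin) HjM.
Qed.

End Main.

Theorem mainTheorem2 (K : fieldType) (L V M : lmodType K)
  (delta : L -> L -> L) (al be : L -> L)
  (mu : V -> V -> V) (aV bV : V -> V)
  (d' : M -> M -> M) (aM bM : M -> M)
  (i : V -> M) (pi : M -> L) :
  BiHomLie delta al be -> BiHomLie mu aV bV -> BiHomLie d' aM bM ->
  BiHomSplitExtension mu aV bV d' aM bM delta al be i pi ->
  exists (ll : L -> V -> V) (lr : V -> L -> V) (theta : L -> L -> V),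
    ((bilinear_map ll) /\ (bilinear_map lr) /\ (bilinear_map theta) /\ (BiHomRep delta al be aV bV ll lr) /\ (BiHomCocycle delta al be ll theta) /\ (BiHomSplitExtension mu aV bV
          (sumBracket delta mu ll lr theta) (sumMap al aV) (sumMap be bV)
          delta al be (@inj0 K L V) (@proj0 K L V)) /\ (BiHomExtEquiv
          (sumBracket delta mu ll lr theta) (sumMap al aV) (sumMap be bV)
          (@inj0 K L V) (@proj0 K L V)
          d' aM bM i pi)).
Proof.
move=> HL HV HM HE.
have HL' := HL; have HV' := HV.
move: HL HV HM => [HdL [Hal [Hbe [HcL [HskL HjL]]]]] [HdV [HaV [HbV [HcV [HskV HjV]]]]]
  [HdM [HaM [HbM [HcM [HskM HjM]]]]].
move: HE => [[_ [_ [_ [[Hil [Hia [Hib Hibr]]] [[Hpl [Hpa [Hpb Hpbr]]] [Hinj [Hsurj Hker]]]]]]]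
  [S [[HS0 [HSl [HSa [HSb HSd]]]] [Hdec Hdisj]]]].
have llb : bilinear_map (ll d' i pi S) by apply: (ll_bil (delta:=delta)); eassumption.
have lrb : bilinear_map (lr d' i pi S) by apply: (lr_bil (delta:=delta)); eassumption.
exists (ll d' i pi S), (lr d' i pi S), (@theta0 K L V).
split; first exact: llb.
split; first exact: lrb.
split; first exact: theta_bil.
split; first by apply: (rep (aM:=aM) (bM:=bM) (delta:=delta)); eassumption.
split; first by apply: (cocyc (delta:=delta)); eassumption.
have Hsum : BiHomLie (sumBracket delta mu (ll d' i pi S) (lr d' i pi S) (@theta0 K L V))
   (sumMap al aV) (sumMap be bV).
  by apply: (sum_lie (aM:=aM) (bM:=bM) (delta:=delta)); eassumption.
split.
  split.
    split; first exact: HV'.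
    split; first exact: Hsum.
    split; first exact: HL'.
    split.
      split; first by move=> a v w; rewrite /inj0 pairE /= scaler0 addr0.
      split; first by move=> v; rewrite /inj0 /sumMap /= (lin0 Hal).
      split; first by move=> v; rewrite /inj0 /sumMap /= (lin0 Hbe).
      move=> v w; rewrite /inj0 /sumBracket /= (bl0l HdL) (bl0l llb) (bl0r lrb).
      by rewrite /theta0 !add0r.
    split.
      split; first by move=> a p q.
      split; first by move=> p.
      split; first by move=> p.
      by move=> p q.
    split; first by move=> v w [].
    split; first by move=> y; exists (y, 0).
    move=> [x v]; rewrite /proj0 /inj0 /=; split; first by move=> [w [<-]].
    by move=> ->; exists v.
  exists (fun p : L * V => p.2 = 0).
  split.
    split; first by [].
    split; first by move=> a u v /= -> ->; rewrite scaler0 addr0.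
    split; first by move=> [x v] /= ->; rewrite (lin0 HaV).
    split; first by move=> [x v] /= ->; rewrite (lin0 HbV).
    move=> [x v] [y w] /= -> ->.
    by rewrite /theta0 (bl0r llb) (bl0l lrb) (bl0l HdV) !addr0.
  split.
    move=> [x v]; exists (x, 0), (0, v); split=> //; split=> //.
    by rewrite pairD /= addr0 add0r.
  by move=> [x v] /= -> ->.
exists (fun v : V => v), (fun x : L => x), (Phi i pi S).
split; first by [].
split; first by [].
split.
  split; first by apply: Phi_lin.
  split; first by move=> p; apply: Phi_al.
  split; first by move=> p; apply: Phi_be.
  by move=> p q; apply: (Phi_br (delta:=delta)); eassumption.
split.
  by exists (Psi i pi S); [apply: PhiK | apply: PsiK].
split.
  move=> v; rewrite /Phi /inj0 /= (lin0 (f := sec pi S)) ?add0r //.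
  by apply: sec_lin; eassumption.
move=> [x v]; rewrite /Phi /proj0 /= (linD Hpl) (pi_i (i:=i) (pi:=pi)) ?addr0 //.
by apply: pi_sec; eassumption.
Qed.
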